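(* Assume the bounded-feature assumption: there is $\Phi>0$ with $\|\phi_{y,x}\|\le\Phi$ for all inputs $x$ and outputs $y$. Consider the alternating procedure (ALRIGHT) described in the context, run for $T$ iterations with constant step size $\alpha_t=\alpha_0/\sqrt{T}$ for all $t\in\{1,\dots,T\}$, where $\alpha_0>0$. Then for any $\lambda\in[0,1]$ its output $\hat\theta_{\mathrm{AL}}=\theta_T$ satisfies $$\mathbb{E}\Big[\lambda f_{\mathrm{DPO}}(\hat\theta_{\mathrm{AL}})+(1-\lambda)f_{\mathrm{SFT}}(\hat\theta_{\mathrm{AL}})-\min_{\theta\in\Theta}\big(\lambda f_{\mathrm{DPO}}(\theta)+(1-\lambda)f_{\mathrm{SFT}}(\theta)\big)\Big]=\mathcal{O}\Big(\frac{\log T}{\sqrt T}\Big),$$ where the expectation is over the randomness of the procedure.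
   Context: Parameter set $\Theta\subseteq\mathbb{R}^d$ is a nonempty closed convex set on which the minimum above is attained, and $\Pi_\Theta$ is Euclidean projection onto it. Policy model: for a finite output set $\mathcal{Y}$, $\pi_\theta(y\mid x)=\exp(\theta^\top\phi_{y,x})/\sum_{y'\in\mathcal{Y}}\exp(\theta^\top\phi_{y',x})$ with feature vectors $\phi_{y,x}\in\mathbb{R}^d$; the reference policy is $\pi_{\mathrm{ref}}=\pi_{\theta_{\mathrm{ref}}}$ for a fixed $\theta_{\mathrm{ref}}$. Datasets: $\mathcal{D}_{\mathrm{DPO}}=\{(x^{(i)},y_w^{(i)},y_\ell^{(i)})\}_{i=1}^{N_1}$ (input, preferred, dispreferred response) and $\mathcal{D}_{\mathrm{SFT}}=\{(x^{(i)},y^{(i)})\}_{i=1}^{N_2}$. With $\sigma$ the sigmoid and $\beta>0$, $h_\beta(\theta;x,y_w,y_\ell)=\beta\log\frac{\pi_\theta(y_w|x)}{\pi_{\mathrm{ref}}(y_w|x)}-\beta\log\frac{\pi_\theta(y_\ell|x)}{\pi_{\mathrm{ref}}(y_\ell|x)}$, $f_{\mathrm{DPO}}(\theta)=-\frac1{N_1}\sum_{\mathcal{D}_{\mathrm{DPO}}}\log\sigma(h_\beta(\theta;x,y_w,y_\ell))$, $f_{\mathrm{SFT}}(\theta)=-\frac1{N_2}\sum_{\mathcal{D}_{\mathrm{SFT}}}\log\pi_\theta(y|x)$, $g_{\mathrm{DPO}}(\theta;x,y_w,y_\ell)=-(1-\sigma(h_\beta))\nabla_\theta h_\beta(\theta;x,y_w,y_\ell)$,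 $g_{\mathrm{SFT}}(\theta;x,y)=-\nabla_\theta\pi_\theta(y|x)/\pi_\theta(y|x)$. ALRIGHT (inputs: datasets, step sizes $\{\alpha_t\}$, $\lambda\in[0,1]$, initialization $\theta_1\in\Theta$): for $t=1,\dots,T-1$, sample $i_t\sim\mathrm{Bernoulli}(\lambda)$; if $i_t=1$, sample $(x^t,y_w^t,y_\ell^t)$ uniformly from $\mathcal{D}_{\mathrm{DPO}}$ and set $\theta_{t+1}=\Pi_\Theta(\theta_t-\alpha_tg_{\mathrm{DPO}}(\theta_t;x^t,y_w^t,y_\ell^t))$; otherwise sample $(x^t,y^t)$ uniformly from $\mathcal{D}_{\mathrm{SFT}}$ and set $\theta_{t+1}=\Pi_\Theta(\theta_t-\alpha_tg_{\mathrm{SFT}}(\theta_t;x^t,y^t))$. Output $\theta_T$. *)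

(* Defs.v *)
From HB Require Import structures.
From mathcomp Require Import all_boot all_order all_algebra.
From mathcomp Require Import all_classical all_reals all_analysis.
Set Implicit Arguments.
Unset Strict Implicit.
Unset Printing Implicit Defensive.
Import Order.TTheory GRing.Theory Num.Theory.
Local Open Scope ring_scope.
Local Open Scope classical_set_scope.

Section ALRIGHT.
Variable R : realType.
Variable d : nat.

Definition dotv (u v : 'rV[R]_d) : R := \sum_(i < d) u 0 i * v 0 i.
Definition enorm (u : 'rV[R]_d) : R := Num.sqrt (dotv u u).

Definition is_euclid_proj (S : set 'rV[R]_d) (P : 'rV[R]_d -> 'rV[R]_d) : Prop :=
  forall u, S (P u) /\ forall z, S z -> enorm (u - P u) <= enorm (u - z).

Variables (X : Type) (Y : finType) (phi : Y -> X -> 'rV[R]_d).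

Definition pi (th : 'rV[R]_d) (y : Y) (x : X) : R :=
  expR (dotv th (phi y x)) / \sum_(y' : Y) expR (dotv th (phi y' x)).

(* gradient of theta |-> log pi_theta(y|x), i.e. grad pi / pi (closed form
   for the softmax policy) *)
Definition grad_logpi (th : 'rV[R]_d) (y : Y) (x : X) : 'rV[R]_d :=
  phi y x - \sum_(y' : Y) pi th y' x *: phi y' x.

Definition sigmoid (z : R) : R := 1 / (1 + expR (- z)).

Variables (theta_ref : 'rV[R]_d) (beta : R).

Definition h_beta (th : 'rV[R]_d) (s : X * Y * Y) : R :=
  let: (x, yw, yl) := s in
  beta * ln (pi th yw x / pi theta_ref yw x)
  - beta * ln (pi th yl x / pi theta_ref yl x).

Definition grad_h_beta (th : 'rV[R]_d) (s : X * Y * Y) : 'rV[R]_d :=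
  let: (x, yw, yl) := s in
  beta *: (grad_logpi th yw x - grad_logpi th yl x).

Definition g_DPO (th : 'rV[R]_d) (s : X * Y * Y) : 'rV[R]_d :=
  - ((1 - sigmoid (h_beta th s)) *: grad_h_beta th s).

Definition g_SFT (th : 'rV[R]_d) (s : X * Y) : 'rV[R]_d :=
  - grad_logpi th s.2 s.1.

Variables (D1 : seq (X * Y * Y)) (D2 : seq (X * Y)).

Definition f_DPO (th : 'rV[R]_d) : R :=
  - ((size D1)%:R^-1 * \sum_(s <- D1) ln (sigmoid (h_beta th s))).

Definition f_SFT (th : 'rV[R]_d) : R :=
  - ((size D2)%:R^-1 * \sum_(s <- D2) ln (pi th s.2 s.1)).

Definition objective (lambda : R) (th : 'rV[R]_d) : R :=
  lambda * f_DPO th + (1 - lambda) * f_SFT th.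

(* Exact expectation of F(theta after n ALRIGHT iterations from theta), with
   constant step size alpha, mixing probability lambda, projection P:
   i_t ~ Bernoulli(lambda), then a uniform sample from the chosen dataset. *)
Fixpoint alright_expect (P : 'rV[R]_d -> 'rV[R]_d) (alpha lambda : R)
    (F : 'rV[R]_d -> R) (n : nat) (th : 'rV[R]_d) {struct n} : R :=
  match n with
  | 0 => F th
  | n'.+1 =>
      lambda * ((size D1)%:R^-1 *
        \sum_(s <- D1) alright_expect P alpha lambda F n' (P (th - alpha *: g_DPO th s)))
      + (1 - lambda) * ((size D2)%:R^-1 *
        \sum_(s <- D2) alright_expect P alpha lambda F n' (P (th - alpha *: g_SFT th s)))
  end.

End ALRIGHT.

(* Main.v *)
Require Import Defs.
From HB Require Import structures.
From mathcomp Require Import all_boot all_order all_algebra.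
From mathcomp Require Import all_classical all_reals all_analysis.
From mathcomp Require Import ring lra zify.
Import Order.TTheory GRing.Theory Num.Theory.
Local Open Scope ring_scope.
Local Open Scope classical_set_scope.
Section Dot.
Context {R : realType} {d : nat}.
Implicit Types u v w : 'rV[R]_d.

Lemma dotvC u v : dotv u v = dotv v u.
Proof. by rewrite /dotv; apply: eq_bigr => i _; rewrite mulrC. Qed.

Lemma dotvDl u v w : dotv (u + v) w = dotv u w + dotv v w.
Proof. by rewrite /dotv -big_split; apply: eq_bigr => i _; rewrite !mxE mulrDl. Qed.

Lemma dotvNl u w : dotv (- u) w = - dotv u w.
Proof. by rewrite /dotv -sumrN; apply: eq_bigr => i _; rewrite !mxE mulNr. Qed.

Lemma dotvBl u v w : dotv (u - v) w = dotv u w - dotv v w.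
Proof. by rewrite dotvDl dotvNl. Qed.

Lemma dotvZl (a : R) u w : dotv (a *: u) w = a * dotv u w.
Proof. by rewrite /dotv mulr_sumr; apply: eq_bigr => i _; rewrite !mxE mulrA. Qed.

Lemma dotvDr u v w : dotv w (u + v) = dotv w u + dotv w v.
Proof. by rewrite dotvC dotvDl !(dotvC w). Qed.
Lemma dotvNr u w : dotv w (- u) = - dotv w u.
Proof. by rewrite dotvC dotvNl dotvC. Qed.
Lemma dotvBr u v w : dotv w (u - v) = dotv w u - dotv w v.
Proof. by rewrite dotvDr dotvNr. Qed.
Lemma dotvZr (a : R) u w : dotv w (a *: u) = a * dotv w u.
Proof. by rewrite dotvC dotvZl dotvC. Qed.

Lemma dotv_suml (I : Type) (r : seq I) (F : I -> 'rV[R]_d) w :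
  dotv (\sum_(i <- r) F i) w = \sum_(i <- r) dotv (F i) w.
Proof.
elim: r => [|a r IH]; first by rewrite !big_nil /dotv big1 // => i _; rewrite mxE mul0r.
by rewrite !big_cons dotvDl IH.
Qed.

Lemma dotv_ge0 u : 0 <= dotv u u.
Proof. by rewrite /dotv; apply: sumr_ge0 => i _; rewrite -expr2 sqr_ge0. Qed.

Lemma dotv_enorm u : dotv u u = enorm u ^+ 2.
Proof. by rewrite /enorm sqr_sqrtr // dotv_ge0. Qed.

Lemma dotv_le_enorm u v : dotv u u <= dotv v v -> enorm u <= enorm v.
Proof. by move=> h; rewrite /enorm ler_sqrt // dotv_ge0. Qed.

Lemma enorm_le_dotv u v : enorm u <= enorm v -> dotv u u <= dotv v v.
Proof.
move=> h; rewrite !dotv_enorm; rewrite ler_pXn2r // ?nnegrE /enorm ?sqrtr_ge0 //.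
Qed.

Lemma dotv_sub2 u v : dotv (u - v) (u - v) <= 2 * dotv u u + 2 * dotv v v.
Proof.
have h : 0 <= dotv (u + v) (u + v) by apply: dotv_ge0.
move: h; rewrite !(dotvDl, dotvDr, dotvNl, dotvNr) (dotvC v u); lra.
Qed.

Lemma dotv_self_sub u : dotv (u - u) (u - u) = 0.
Proof. by rewrite subrr /dotv big1 // => i _; rewrite mxE mul0r. Qed.

End Dot.
Section Proj.
Local Open Scope convex_scope.
Context {R : realType} {d : nat}.

Lemma conv_rowE (t : R) (h0 : 0 <= t) (h1 : t <= 1) (x y : 'rV[R]_d) :
  (x : convex_lmodType 'rV[R]_d) <| Itv01 h0 h1 |> y = t *: x + (1 - t) *: y.
Proof. by []. Qed.

Lemma proj_aux1 (a b : 'rV[R]_d) :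
  (forall t : R, 0 < t -> t <= 1 -> dotv a a <= dotv (a - t *: b) (a - t *: b)) ->
  dotv a b <= 0.
Proof.
move=> H.
have key : forall t : R, 0 < t -> t <= 1 -> 2 * dotv a b <= t * dotv b b.
  move=> t t0 t1; have := H t t0 t1.
  rewrite !(dotvDl, dotvDr, dotvNl, dotvNr, dotvZl, dotvZr) (dotvC b a) => h.
  have h2 : t * (2 * dotv a b) <= t * (t * dotv b b) by lra.
  by rewrite -(ler_pM2l t0).
rewrite leNgt; apply/negP => c0.
have bb0 := dotv_ge0 b.
set c := dotv a b in c0 key.
have cb0 : 0 < c + dotv b b by lra.
have := key (c / (c + dotv b b)).
rewrite divr_gt0 // ler_pdivrMr // mul1r => /(_ isT); rewrite lerDl => /(_ bb0).
rewrite mulrAC ler_pdivlMr // => h.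
nra.
Qed.

Lemma proj_aux2 (a b : 'rV[R]_d) : dotv a b <= 0 ->
  dotv (- b) (- b) <= dotv (a - b) (a - b).
Proof.
move=> h; have := dotv_ge0 a.
rewrite !(dotvDl, dotvDr, dotvNl, dotvNr) (dotvC b a); lra.
Qed.

Lemma proj_nonexp (S : set 'rV[R]_d) (P : 'rV[R]_d -> 'rV[R]_d) u z :
  is_euclid_proj S P -> convex_set S -> S z ->
  dotv (P u - z) (P u - z) <= dotv (u - z) (u - z).
Proof.
move=> hP hS hz; have [hPu hmin] := hP u.
have hab : dotv (u - P u) (z - P u) <= 0.
  apply: proj_aux1 => t t0 t1.
  have h0 : 0 <= t by apply: ltW.
  have hin : S (t *: z + (1 - t) *: P u).
    have := hS z (P u) (Itv01 h0 t1); rewrite !inE; move=> /(_ hz hPu).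
    by rewrite conv_rowE.
  have := enorm_le_dotv _ _ (hmin _ hin).
  suff -> : u - (t *: z + (1 - t) *: P u) = u - P u - t *: (z - P u) by [].
  by apply/matrixP => i j; rewrite !mxE; ring.
have := proj_aux2 _ _ hab.
have -> : u - P u - (z - P u) = u - z by apply/matrixP => i j; rewrite !mxE; ring.
have -> : - (z - P u) = P u - z by apply/matrixP => i j; rewrite !mxE; ring.
by [].
Qed.
End Proj.
Section Loss.
Context {R : realType} {d : nat} {X : Type} {Y : finType} (phi : Y -> X -> 'rV[R]_d).

Definition Zs (th : 'rV[R]_d) (x : X) : R := \sum_(y : Y) expR (dotv th (phi y x)).

Lemma Zs_gt0 th x (y : Y) : 0 < Zs th x.
Proof.
rewrite /Zs (bigD1 y) //=.
have h1 := expR_gt0 (dotv th (phi y x)).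
have h2 : 0 <= \sum_(i | i != y) expR (dotv th (phi i x)).
  by apply: sumr_ge0 => i _; apply: expR_ge0.
lra.
Qed.

Lemma piE th y x : Defs.pi phi th y x = expR (dotv th (phi y x)) / Zs th x.
Proof. by []. Qed.

Lemma pi_gt0 th y x : 0 < Defs.pi phi th y x.
Proof. by rewrite piE divr_gt0 ?expR_gt0 ?(Zs_gt0 th x y). Qed.

Lemma ln_pi th y x : ln (Defs.pi phi th y x) = dotv th (phi y x) - ln (Zs th x).
Proof.
by rewrite piE ln_div ?posrE ?expR_gt0 ?(Zs_gt0 th x y) // expRK.
Qed.

Lemma sum_pi th x (y : Y) : \sum_(y' : Y) Defs.pi phi th y' x = 1.
Proof.
rewrite /Defs.pi -mulr_suml divff //; have := Zs_gt0 th x y; rewrite /Zs => h.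
by rewrite gt_eqF.
Qed.

Lemma jensen_exp (p a : Y -> R) : (forall y, 0 <= p y) -> \sum_y p y = 1 ->
  expR (\sum_y p y * a y) <= \sum_y p y * expR (a y).
Proof.
move=> p0 p1; set m := \sum_y p y * a y.
have e0 : forall mm, \sum_y p y * (expR mm * (1 + (a y - mm))) =
     expR mm * \sum_y p y + expR mm * \sum_y p y * a y - expR mm * mm * \sum_y p y.
  move=> mm; rewrite !mulr_sumr -big_split -sumrB /=; apply: eq_bigr => y _; ring.
have e : \sum_y p y * (expR m * (1 + (a y - m))) = expR m.
  rewrite e0 p1 -/m; ring.
rewrite -[X in X <= _]e; apply: ler_sum => y _; apply: ler_wpM2l => //.
rewrite -[X in _ <= expR X](subrK m (a y)) expRD (mulrC (expR (a y - m))).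
by apply: ler_wpM2l; [exact: expR_ge0 | exact: expR_ge1Dx].
Qed.

Lemma jensen_ln (p a : Y -> R) : (forall y, 0 <= p y) -> \sum_y p y = 1 ->
  \sum_y p y * a y <= ln (\sum_y p y * expR (a y)).
Proof.
move=> p0 p1; have h := jensen_exp p a p0 p1.
rewrite -{1}(expRK (\sum_y p y * a y)) ler_ln // posrE ?expR_gt0 //.
by apply: (lt_le_trans (expR_gt0 _) h).
Qed.

End Loss.
Section Loss2.
Context {R : realType} {d : nat} {X : Type} {Y : finType} (phi : Y -> X -> 'rV[R]_d).

Lemma lnZ_conv th z x (y0 : Y) :
  \sum_y Defs.pi phi th y x * (dotv z (phi y x) - dotv th (phi y x))
  <= ln (Zs phi z x) - ln (Zs phi th x).
Proof.
have Zt := Zs_gt0 phi th x y0; have Zz := Zs_gt0 phi z x y0.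
rewrite -ln_div ?posrE //.
have -> : Zs phi z x / Zs phi th x =
   \sum_y Defs.pi phi th y x * expR (dotv z (phi y x) - dotv th (phi y x)).
  rewrite /Zs mulr_suml; apply: eq_bigr => y _; rewrite piE expRB.
  rewrite /Zs; field.
  by move: Zt; rewrite /Zs => h; rewrite !gt_eqF ?expR_gt0.
apply: jensen_ln; last exact: (sum_pi phi th x y0).
by move=> y; apply: ltW; apply: pi_gt0.
Qed.

Lemma sft_conv th z (s : X * Y) :
  - ln (Defs.pi phi th s.2 s.1) - - ln (Defs.pi phi z s.2 s.1)
  <= dotv (g_SFT phi th s) (th - z).
Proof.
case: s => x y /=; rewrite /g_SFT /grad_logpi /= !ln_pi.
have h := lnZ_conv th z x y.
rewrite dotvNl dotvBl dotv_suml.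
have -> : \sum_(y' : Y) dotv (Defs.pi phi th y' x *: phi y' x) (th - z) =
   - \sum_y Defs.pi phi th y x * (dotv z (phi y x) - dotv th (phi y x)).
  rewrite -sumrN; apply: eq_bigr => y' _; rewrite dotvZl dotvBr !(dotvC (phi _ _)); ring.
rewrite dotvBr !(dotvC (phi _ _)); lra.
Qed.

Lemma sigmoid_bounds (t : R) : 0 < sigmoid t < 1.
Proof.
rewrite /sigmoid; have e := expR_gt0 (- t).
apply/andP; split; first by rewrite divr_gt0 //; lra.
by rewrite ltr_pdivrMr ?mul1r; lra.
Qed.

Lemma softplus_conv (t tp : R) :
  - ln (sigmoid t) - - ln (sigmoid tp) <= (1 - sigmoid t) * (tp - t).
Proof.
set A := 1 + expR (- t); set B := 1 + expR (- tp).
have eA := expR_gt0 (- t); have eB := expR_gt0 (- tp).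
have A0 : 0 < A by rewrite /A; lra.
have B0 : 0 < B by rewrite /B; lra.
have lsA : ln (sigmoid t) = - ln A by rewrite /sigmoid div1r lnV ?posrE.
have lsB : ln (sigmoid tp) = - ln B by rewrite /sigmoid div1r lnV ?posrE.
rewrite lsA lsB !opprK.
set q := 1 - sigmoid t; set dl := tp - t.
have sE : sigmoid t = 1 / A by [].
have qE : q = expR (- t) / A by rewrite /q sE /A; field; rewrite gt_eqF.
have BA : B / A = sigmoid t + q * expR (- dl).
  rewrite sE qE /B /A /dl (_ : - (tp - t) = - tp - - t); last by ring.
  rewrite expRB; field; apply/andP; split; rewrite gt_eqF //; lra.
have c1 : expR (- (q * dl)) * (1 + (- dl + q * dl)) <= expR (- dl).
  rewrite -[X in _ <= expR X](subrK (- (q * dl))) expRD mulrC.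
  apply: ler_wpM2r; first exact: expR_ge0.
  rewrite (_ : - dl - - (q * dl) = - dl + q * dl) ?expR_ge1Dx //; ring.
have c2 : expR (- (q * dl)) * (1 + q * dl) <= 1.
  rewrite -[X in _ <= X](expRxMexpNx_1 (q * dl)) (mulrC (expR (q * dl))); apply: ler_wpM2l; first exact: expR_ge0.
  exact: expR_ge1Dx.
have hs := sigmoid_bounds t.
have q0 : 0 <= q by rewrite /q; lra.
have s0 : 0 <= sigmoid t by lra.
have c3 : expR (- (q * dl)) <= B / A.
  rewrite BA.
  have e1 : expR (- (q * dl)) = sigmoid t * (expR (- (q * dl)) * (1 + q * dl))
     + q * (expR (- (q * dl)) * (1 + (- dl + q * dl))).
    rewrite /q; ring.
  rewrite e1; apply: lerD; first by rewrite -[X in _ <= X]mulr1; apply: ler_wpM2l.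
  by apply: ler_wpM2l.
have : - (q * dl) <= ln B - ln A.
  rewrite -ln_div ?posrE // -{1}(expRK (- (q * dl))) ler_ln ?posrE ?expR_gt0 ?divr_gt0 //.
lra.
Qed.

End Loss2.
Section Loss3.
Context {R : realType} {d : nat} {X : Type} {Y : finType} (phi : Y -> X -> 'rV[R]_d).
Variables (theta_ref : 'rV[R]_d) (beta : R).

Lemma lnpiR th th' y x : ln (Defs.pi phi th y x / Defs.pi phi th' y x) =
  ln (Defs.pi phi th y x) - ln (Defs.pi phi th' y x).
Proof. by apply: ln_div; rewrite posrE pi_gt0. Qed.

Lemma h_diff th z (s : X * Y * Y) :
  h_beta phi theta_ref beta z s - h_beta phi theta_ref beta th s =
  beta * ((dotv z (phi s.1.2 s.1.1) - dotv th (phi s.1.2 s.1.1))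
        - (dotv z (phi s.2 s.1.1) - dotv th (phi s.2 s.1.1))).
Proof.
case: s => [[x yw] yl] /=; rewrite /h_beta.
rewrite !lnpiR !ln_pi; ring.
Qed.

Lemma gradh_dot th z (s : X * Y * Y) :
  dotv (grad_h_beta phi beta th s) (th - z) =
  - (h_beta phi theta_ref beta z s - h_beta phi theta_ref beta th s).
Proof.
rewrite h_diff; case: s => [[x yw] yl] /=; rewrite /grad_h_beta /grad_logpi.
rewrite dotvZl !dotvBl !dotvBr !(dotvC (phi _ _)); ring.
Qed.

Lemma dpo_conv th z (s : X * Y * Y) :
  - ln (sigmoid (h_beta phi theta_ref beta th s))
  - - ln (sigmoid (h_beta phi theta_ref beta z s))
  <= dotv (g_DPO phi theta_ref beta th s) (th - z).
Proof.
rewrite /g_DPO dotvNl dotvZl gradh_dot.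
have := softplus_conv (h_beta phi theta_ref beta th s) (h_beta phi theta_ref beta z s).
set a := 1 - _; move=> h.
by apply: (le_trans h); rewrite mulrN opprK.
Qed.

End Loss3.
Section Loss4.
Context {R : realType} {d : nat} {X : Type} {Y : finType} (phi : Y -> X -> 'rV[R]_d).
Variables (theta_ref : 'rV[R]_d) (beta : R).

Lemma sqnorm_jensen (p : Y -> R) (v : Y -> 'rV[R]_d) :
  (forall y, 0 <= p y) -> \sum_y p y = 1 ->
  dotv (\sum_y p y *: v y) (\sum_y p y *: v y) <= \sum_y p y * dotv (v y) (v y).
Proof.
move=> p0 p1; set m := \sum_y p y *: v y.
have h0 : 0 <= \sum_y p y * dotv (v y - m) (v y - m).
  by apply: sumr_ge0 => y _; apply: mulr_ge0 => //; apply: dotv_ge0.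
have hm : \sum_y p y * dotv (v y) m = dotv m m.
  by rewrite {3}/m dotv_suml; apply: eq_bigr => y _; rewrite dotvZl.
have e : \sum_y p y * dotv (v y - m) (v y - m) =
   \sum_y p y * dotv (v y) (v y) - 2 * \sum_y p y * dotv (v y) m
   + (\sum_y p y) * dotv m m.
  rewrite mulr_sumr mulr_suml -sumrB -big_split /=; apply: eq_bigr => y _.
  rewrite !(dotvDl, dotvDr, dotvNl, dotvNr) (dotvC m (v y)); ring.
move: h0; rewrite e hm p1; lra.
Qed.

Variable Phi : R.
Hypothesis hphi : forall x y, dotv (phi y x) (phi y x) <= Phi ^+ 2.

Lemma m_bound th x (y0 : Y) :
  dotv (\sum_y Defs.pi phi th y x *: phi y x) (\sum_y Defs.pi phi th y x *: phi y x)
  <= Phi ^+ 2.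
Proof.
apply: (le_trans (sqnorm_jensen _ _ _ (sum_pi phi th x y0))).
  by move=> y; apply: ltW; apply: pi_gt0.
apply: (@le_trans _ _ (\sum_y Defs.pi phi th y x * Phi ^+ 2)).
  apply: ler_sum => y _; apply: ler_wpM2l; [exact: ltW (pi_gt0 _ _ _ _)| exact: hphi].
by rewrite -mulr_suml (sum_pi phi th x y0) mul1r.
Qed.

Lemma gsft_bound th (s : X * Y) :
  dotv (g_SFT phi th s) (g_SFT phi th s) <= 4 * Phi ^+ 2.
Proof.
case: s => x y; rewrite /g_SFT /grad_logpi /= dotvNl dotvNr opprK.
have h1 := dotv_sub2 (phi y x) (\sum_y' Defs.pi phi th y' x *: phi y' x).
have h2 := m_bound th x y; have h3 := hphi x y.
lra.
Qed.

Lemma gdpo_bound th (s : X * Y * Y) :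
  dotv (g_DPO phi theta_ref beta th s) (g_DPO phi theta_ref beta th s)
  <= 4 * beta ^+ 2 * Phi ^+ 2.
Proof.
case: s => [[x yw] yl]; rewrite /g_DPO /grad_h_beta.
have -> : grad_logpi phi th yw x - grad_logpi phi th yl x = phi yw x - phi yl x.
  by rewrite /grad_logpi; apply/matrixP => i j; rewrite !mxE; ring.
rewrite dotvNl dotvNr opprK !(dotvZl, dotvZr).
set sg := sigmoid _; have hs := sigmoid_bounds (h_beta phi theta_ref beta th (x, yw, yl)).
rewrite -/sg in hs.
have h1 := dotv_sub2 (phi yw x) (phi yl x).
have h2 := hphi x yw; have h3 := hphi x yl.
set D := dotv _ _ in h1 *.
have D0 : 0 <= D by rewrite /D; apply: dotv_ge0.
have hD : D <= 4 * Phi ^+ 2 by lra.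
have b2 : 0 <= beta ^+ 2 by rewrite sqr_ge0.
have q1 : (1 - sg) * (1 - sg) <= 1 by nra.
have q0 : 0 <= (1 - sg) * (1 - sg) by nra.
have : (1 - sg) * (1 - sg) * (beta ^+ 2 * D) <= 1 * (beta ^+ 2 * (4 * Phi ^+ 2)).
  apply: ler_pM => //; first by apply: mulr_ge0.
  by apply: ler_wpM2l.
move=> h.
have -> : (1 - sg) * (beta * ((1 - sg) * (beta * D))) =
   (1 - sg) * (1 - sg) * (beta ^+ 2 * D) by rewrite expr2; ring.
apply: (le_trans h); rewrite mul1r (_ : beta ^+ 2 * (4 * Phi ^+ 2) = 4 * beta ^+ 2 * Phi ^+ 2) ?lexx //; ring.
Qed.

End Loss4.
Section Iter.
Context {R : realType} {d : nat} {X : Type} {Y : finType} (phi : Y -> X -> 'rV[R]_d).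
Variables (theta_ref : 'rV[R]_d) (beta : R) (D1 : seq (X * Y * Y)) (D2 : seq (X * Y)).
Variables (P : 'rV[R]_d -> 'rV[R]_d) (alpha lambda : R) (S : set 'rV[R]_d).
Hypothesis hPS : forall u, S (P u).
Hypothesis hl0 : 0 <= lambda.
Hypothesis hl1 : lambda <= 1.
Hypothesis hD1 : (0 < size D1)%N.
Hypothesis hD2 : (0 < size D2)%N.

Definition K (h : 'rV[R]_d -> R) (th : 'rV[R]_d) : R :=
  lambda * ((size D1)%:R^-1 *
        \sum_(s <- D1) h (P (th - alpha *: g_DPO phi theta_ref beta th s)))
      + (1 - lambda) * ((size D2)%:R^-1 *
        \sum_(s <- D2) h (P (th - alpha *: g_SFT phi th s))).

Definition E n h th := alright_expect phi theta_ref beta D1 D2 P alpha lambda h n th.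

Lemma E_S n h th : E n.+1 h th = K (E n h) th.
Proof. by []. Qed.

Lemma E_0 h th : E 0 h th = h th.
Proof. by []. Qed.

Lemma K_mono h1 h2 th : (forall u, S u -> h1 u <= h2 u) -> K h1 th <= K h2 th.
Proof.
move=> H; rewrite /K; apply: lerD; apply: ler_wpM2l; rewrite ?subr_ge0 //;
  apply: ler_wpM2l; rewrite ?invr_ge0 ?ler0n //; apply: ler_sum => s _; exact: H.
Qed.

Lemma K_ext h1 h2 th : (forall u, S u -> h1 u = h2 u) -> K h1 th = K h2 th.
Proof.
move=> H; apply/eqP; rewrite eq_le; apply/andP; split; apply: K_mono => u Su;
  by rewrite H.
Qed.

Lemma sum_const_seq (T : Type) (r : seq T) (c : R) : \sum_(s <- r) c = (size r)%:R * c.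
Proof.
elim: r => [|a r IH]; first by rewrite big_nil mul0r.
by rewrite big_cons IH /= -add1n natrD mulrDl mul1r.
Qed.

Lemma avg_const (T : Type) (r : seq T) (c : R) : (0 < size r)%N ->
  (size r)%:R^-1 * \sum_(s <- r) c = c.
Proof.
move=> h; rewrite sum_const_seq mulrA mulVf ?mul1r //.
by rewrite pnatr_eq0 -lt0n.
Qed.

Lemma K_const c th : K (fun _ => c) th = c.
Proof. by rewrite /K !avg_const //; ring. Qed.

Lemma K_add h1 h2 th : K (fun u => h1 u + h2 u) th = K h1 th + K h2 th.
Proof. by rewrite /K !big_split /=; ring. Qed.

Lemma K_scale c h th : K (fun u => c * h u) th = c * K h th.
Proof. by rewrite /K -!mulr_sumr; ring. Qed.

Lemma E_mono n h1 h2 th : (forall u, S u -> h1 u <= h2 u) -> S th -> E n h1 th <= E n h2 th.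
Proof.
elim: n th => [|n IH] th H Sth; first by rewrite !E_0; apply: H.
rewrite !E_S; apply: K_mono => u Su; exact: IH.
Qed.

Lemma E_ext n h1 h2 th : (forall u, h1 u = h2 u) -> E n h1 th = E n h2 th.
Proof.
elim: n th => [|n IH] th H; first by rewrite !E_0.
by rewrite !E_S; apply: K_ext => u Su; apply: IH.
Qed.

Lemma E_const n c th : E n (fun _ => c) th = c.
Proof.
elim: n th => [|n IH] th //; rewrite E_S -[RHS](K_const c th).
by apply: K_ext => u _; apply: IH.
Qed.

Lemma E_add n h1 h2 th : E n (fun u => h1 u + h2 u) th = E n h1 th + E n h2 th.
Proof.
elim: n th => [|n IH] th //; rewrite !E_S -K_add.
by apply: K_ext => u _; apply: IH.
Qed.

Lemma E_scale n c h th : E n (fun u => c * h u) th = c * E n h th.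
Proof.
elim: n th => [|n IH] th //; rewrite !E_S -K_scale.
by apply: K_ext => u _; apply: IH.
Qed.

Lemma E_shift n h th : E n.+1 h th = E n (K h) th.
Proof.
elim: n th => [|n IH] th //; rewrite E_S [RHS]E_S.
by apply: K_ext => u _; apply: IH.
Qed.

Lemma E_comp j m h th : E j (fun z => E m h z) th = E (j + m) h th.
Proof.
elim: j th => [|j IH] th; first by rewrite add0n.
rewrite addSn !E_S; apply: K_ext => u _; apply: IH.
Qed.

End Iter.
Section OneStep.
Context {R : realType} {d : nat} {X : Type} {Y : finType} (phi : Y -> X -> 'rV[R]_d).
Variables (theta_ref : 'rV[R]_d) (beta : R) (D1 : seq (X * Y * Y)) (D2 : seq (X * Y)).
Variables (P : 'rV[R]_d -> 'rV[R]_d) (alpha lambda : R) (S : set 'rV[R]_d).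
Hypothesis hP : is_euclid_proj S P.
Hypothesis hconv : convex_set S.
Hypothesis hl0 : 0 <= lambda.
Hypothesis hl1 : lambda <= 1.
Hypothesis hD1 : (0 < size D1)%N.
Hypothesis hD2 : (0 < size D2)%N.
Hypothesis ha0 : 0 <= alpha.
Variable G2 : R.
Hypothesis hG1 : forall th s, dotv (g_DPO phi theta_ref beta th s) (g_DPO phi theta_ref beta th s) <= G2.
Hypothesis hG2 : forall th s, dotv (g_SFT phi th s) (g_SFT phi th s) <= G2.

Lemma avg_le (T : Type) (r : seq T) (Q L1 L2 : T -> R) (B c : R) : (0 < size r)%N ->
  (forall s, Q s <= B + c * (L1 s - L2 s)) ->
  (size r)%:R^-1 * \sum_(s <- r) Q s <=
  B + c * ((size r)%:R^-1 * \sum_(s <- r) L1 s - (size r)%:R^-1 * \sum_(s <- r) L2 s).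
Proof.
move=> hr H.
apply: (@le_trans _ _ ((size r)%:R^-1 * \sum_(s <- r) (B + c * (L1 s - L2 s)))).
  by apply: ler_wpM2l; rewrite ?invr_ge0 ?ler0n //; apply: ler_sum => s _; apply: H.
rewrite big_split /= -mulr_sumr sumrB mulrDr avg_const //.
rewrite (_ : (size r)%:R^-1 * (c * (\sum_(i <- r) L1 i - \sum_(i <- r) L2 i)) =
   c * ((size r)%:R^-1 * \sum_(s <- r) L1 s - (size r)%:R^-1 * \sum_(s <- r) L2 s)) ?lexx //.
ring.
Qed.

Lemma dotv_expand (w g : 'rV[R]_d) (a : R) :
  dotv (w - a *: g) (w - a *: g) = dotv w w - 2 * a * dotv g w + a ^+ 2 * dotv g g.
Proof. rewrite !(dotvDl, dotvDr, dotvNl, dotvNr, dotvZl, dotvZr) (dotvC w g); ring. Qed.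

Lemma step_ineq (g th z : 'rV[R]_d) (D : R) : S z ->
  D <= dotv g (th - z) -> dotv g g <= G2 ->
  dotv (P (th - alpha *: g) - z) (P (th - alpha *: g) - z) <=
  dotv (th - z) (th - z) + alpha ^+ 2 * G2 + (2 * alpha) * (- D).
Proof.
move=> Sz hD hg.
apply: le_trans (proj_nonexp _ _ _ _ hP hconv Sz) _.
have -> : th - alpha *: g - z = (th - z) - alpha *: g.
  by apply/matrixP => i j; rewrite !mxE; ring.
rewrite dotv_expand.
have h1 : alpha * D <= alpha * dotv g (th - z) by apply: ler_wpM2l.
have h2 : alpha ^+ 2 * dotv g g <= alpha ^+ 2 * G2 by apply: ler_wpM2l; rewrite ?sqr_ge0.
lra.
Qed.

Lemma combine_le (l w q c a1 b1 a2 b2 : R) :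
  l * (w + q + c * (a1 - b1)) + (1 - l) * (w + q + c * (a2 - b2)) <=
  w - c * (l * - a1 + (1 - l) * - a2 - (l * - b1 + (1 - l) * - b2)) + q.
Proof. rewrite le_eqVlt; apply/orP; left; apply/eqP; ring. Qed.

Lemma oppE (a b : R) : - (- a - - b) = a - b.
Proof. ring. Qed.

Lemma K_onestep z th : S z ->
  K phi theta_ref beta D1 D2 P alpha lambda (fun u => dotv (u - z) (u - z)) th <=
  dotv (th - z) (th - z)
  - 2 * alpha * (objective phi theta_ref beta D1 D2 lambda th
                 - objective phi theta_ref beta D1 D2 lambda z)
  + alpha ^+ 2 * G2.
Proof.
move=> Sz.
have k1 := avg_le _ D1 (fun s => dotv (P (th - alpha *: g_DPO phi theta_ref beta th s) - z)
                                 (P (th - alpha *: g_DPO phi theta_ref beta th s) - z))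
   (fun s => ln (sigmoid (h_beta phi theta_ref beta th s)))
   (fun s => ln (sigmoid (h_beta phi theta_ref beta z s)))
   (dotv (th - z) (th - z) + alpha ^+ 2 * G2) (2 * alpha) hD1
   (fun s => ltac:(by have := step_ineq _ th z _ Sz (dpo_conv phi theta_ref beta th z s) (hG1 th s); rewrite oppE)).
have k2 := avg_le _ D2 (fun s => dotv (P (th - alpha *: g_SFT phi th s) - z)
                                 (P (th - alpha *: g_SFT phi th s) - z))
   (fun s => ln (Defs.pi phi th s.2 s.1))
   (fun s => ln (Defs.pi phi z s.2 s.1))
   (dotv (th - z) (th - z) + alpha ^+ 2 * G2) (2 * alpha) hD2
   (fun s => ltac:(by have := step_ineq _ th z _ Sz (sft_conv phi th z s) (hG2 th s); rewrite oppE)).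
rewrite /K; apply: le_trans (lerD (ler_wpM2l hl0 k1) (ler_wpM2l _ k2)) _.
  by rewrite subr_ge0.
rewrite /objective /f_DPO /f_SFT.
exact: combine_le.
Qed.
End OneStep.
Section Seq.
Context {R : realType}.

Lemma div_step (p x a c : R) : 0 < p -> a + x - (p + 1) * a <= (p + 1) * c ->
  x / p <= (a + x) / (p + 1) + c / p.
Proof.
move=> p0 h.
have p1 : 0 < p + 1 by lra.
have e : x / p - c / p = (x - c) / p by rewrite mulrBl.
suff : (x - c) / p <= (a + x) / (p + 1) by rewrite -e; lra.
rewrite ler_pdivrMr // mulrAC ler_pdivlMr //.
nra.
Qed.

Lemma harmonic_last (a : nat -> R) (c : R) (N : nat) :
  (forall j k, (j + k <= N)%N -> \sum_(m < k.+1) (a (j + m)%N - a j) <= k.+1%:R * c) ->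
  a N <= (\sum_(t < N.+1) a t) / N.+1%:R + c * \sum_(i < N) (i.+1%:R)^-1.
Proof.
move=> H.
have key : forall k, (k <= N)%N -> a N <= (\sum_(m < k.+1) a (N - k + m)%N) / k.+1%:R
                                        + c * \sum_(i < k) (i.+1%:R)^-1.
  elim => [|k IH] hk.
    by rewrite big_ord1 big_ord0 subn0 addn0 divr1 mulr0 addr0 lexx.
  have IH' := IH (ltnW hk).
  set x := \sum_(m < k.+1) a (N - k + m)%N in IH'.
  have eU : \sum_(m < k.+2) a (N - k.+1 + m)%N = a (N - k.+1)%N + x.
    rewrite big_ord_recl addn0 /x; congr (_ + _); apply: eq_bigr => i _.
    congr a; rewrite lift0 /=; lia.
  have hyp := H (N - k.+1)%N k.+1 ltac:(lia).
  rewrite sumrB sumr_const card_ord -(mulr_natl (a (N - k.+1)%N)) eU in hyp.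
  rewrite eU big_ord_recr /= mulrDr addrA.
  have := div_step k.+1%:R x (a (N - k.+1)%N) c ltac:(by rewrite ltr0n).
  rewrite -natr1 in hyp *; move=> /(_ hyp).
  move=> h; apply: (le_trans IH'); have := lerD h (lexx (c * \sum_(i < k) i.+1%:R^-1)); by rewrite addrAC.
have := key N (leqnn N).
rewrite subnn; under eq_bigr => i _ do rewrite add0n.
by [].
Qed.

End Seq.
Section Main.
Context {R : realType} {d : nat} {X : Type} {Y : finType} (phi : Y -> X -> 'rV[R]_d).
Variables (theta_ref : 'rV[R]_d) (beta : R) (D1 : seq (X * Y * Y)) (D2 : seq (X * Y)).
Variables (P : 'rV[R]_d -> 'rV[R]_d) (alpha lambda : R) (S : set 'rV[R]_d).
Hypothesis hP : is_euclid_proj S P.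
Hypothesis hconv : convex_set S.
Hypothesis hl0 : 0 <= lambda.
Hypothesis hl1 : lambda <= 1.
Hypothesis hD1 : (0 < size D1)%N.
Hypothesis hD2 : (0 < size D2)%N.
Hypothesis ha0 : 0 < alpha.
Variable G2 : R.
Hypothesis hG1 : forall th s, dotv (g_DPO phi theta_ref beta th s) (g_DPO phi theta_ref beta th s) <= G2.
Hypothesis hG2 : forall th s, dotv (g_SFT phi th s) (g_SFT phi th s) <= G2.
Variables (theta1 theta_star : 'rV[R]_d).
Hypothesis hth1 : S theta1.
Hypothesis hstar : S theta_star.
Hypothesis hmin : forall th, S th ->
  objective phi theta_ref beta D1 D2 lambda theta_star <= objective phi theta_ref beta D1 D2 lambda th.

Let hPS : forall u, S (P u). Proof. by move=> u; case: (hP u). Qed.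
Let ha0' : 0 <= alpha. Proof. exact: ltW. Qed.

Let Em n h th := E phi theta_ref beta D1 D2 P alpha lambda n h th.
Let f := objective phi theta_ref beta D1 D2 lambda.
Let dist (z u : 'rV[R]_d) := dotv (u - z) (u - z).

Let Emono n h1 h2 th : (forall u, S u -> h1 u <= h2 u) -> S th -> Em n h1 th <= Em n h2 th.
Proof. exact: (E_mono _ _ _ _ _ _ _ _ _ hPS hl0 hl1 n h1 h2 th). Qed.

Let Eext n h1 h2 th : (forall u, h1 u = h2 u) -> Em n h1 th = Em n h2 th.
Proof. exact: (E_ext _ _ _ _ _ _ _ _ _ hPS hl0 hl1 n h1 h2 th). Qed.

Let Econst n c th : Em n (fun _ => c) th = c.
Proof. exact: (E_const _ _ _ _ _ _ _ _ _ hPS hl0 hl1 hD1 hD2 n c th). Qed.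

Let Elin n (a b c : R) h1 h2 h3 th :
  Em n (fun u => h1 u + a * h2 u + (b * h3 u + c)) th =
  Em n h1 th + a * Em n h2 th + (b * Em n h3 th + c).
Proof.
rewrite /Em (E_add _ _ _ _ _ _ _ _ _ hPS hl0 hl1 n (fun u => h1 u + a * h2 u) (fun u => b * h3 u + c)).
rewrite (E_add _ _ _ _ _ _ _ _ _ hPS hl0 hl1 n h1 (fun u => a * h2 u)).
rewrite (E_add _ _ _ _ _ _ _ _ _ hPS hl0 hl1 n (fun u => b * h3 u) (fun _ => c)).
by rewrite !(E_scale _ _ _ _ _ _ _ _ _ hPS hl0 hl1) (E_const _ _ _ _ _ _ _ _ _ hPS hl0 hl1 hD1 hD2).
Qed.

Let Eshift n h th : Em n.+1 h th = Em n (K phi theta_ref beta D1 D2 P alpha lambda h) th.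
Proof. exact: (E_shift _ _ _ _ _ _ _ _ _ hPS hl0 hl1 n h th). Qed.

Let Ecomp j m h th : Em j (fun z => Em m h z) th = Em (j + m) h th.
Proof. exact: (E_comp _ _ _ _ _ _ _ _ _ hPS hl0 hl1 j m h th). Qed.

Let Konestep z th : S z ->
  K phi theta_ref beta D1 D2 P alpha lambda (dist z) th <=
  dist z th + (- (2 * alpha)) * f th + (2 * alpha * f z + alpha ^+ 2 * G2).
Proof.
move=> Sz; have := K_onestep phi theta_ref beta D1 D2 P alpha lambda S hP hconv hl0 hl1 hD1 hD2 ha0' G2 hG1 hG2 z th Sz.
rewrite /dist /f; lra.
Qed.

Let A k := Em k f theta1.
Let fs := f theta_star.

Lemma dist_ge0 z u : 0 <= dist z u.
Proof. exact: dotv_ge0. Qed.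

Lemma std_bound N :
  2 * alpha * \sum_(k < N) (A k - fs) <= dist theta_star theta1 + N%:R * (alpha ^+ 2 * G2).
Proof.
pose B k := Em k (dist theta_star) theta1.
have step : forall k, B k.+1 <= B k + (- (2 * alpha)) * A k + (2 * alpha * fs + alpha ^+ 2 * G2).
  move=> k; rewrite /B Eshift /A.
  have e := Elin k (- (2 * alpha)) 0 (2 * alpha * fs + alpha ^+ 2 * G2) (dist theta_star) f f theta1.
  rewrite mul0r add0r in e; rewrite -e.
  apply: Emono => // u Su; rewrite mul0r add0r; exact: Konestep.
have B0 : forall k, 0 <= B k.
  move=> k; rewrite -(Econst k 0 theta1); apply: Emono => // u _; exact: dist_ge0.
suff : 2 * alpha * \sum_(k < N) (A k - fs) <= B 0%N - B N + N%:R * (alpha ^+ 2 * G2).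
  by have := B0 N; rewrite /B /Em /E /=; lra.
elim: N => [|N IH]; first by rewrite big_ord0 /B; lra.
rewrite big_ord_recr /= mulrDr -natr1 (mulrDl _ 1) mul1r.
have := step N; lra.
Qed.

Let C j m := Em j (fun z => Em m (dist z) z) theta1.

Lemma last_step j m :
  C j m.+1 <= C j m + (- (2 * alpha)) * A (j + m)%N + (2 * alpha * A j + alpha ^+ 2 * G2).
Proof.
have inner : forall z, S z -> Em m.+1 (dist z) z <=
   Em m (dist z) z + (- (2 * alpha)) * Em m f z + (2 * alpha * f z + alpha ^+ 2 * G2).
  move=> z Sz; rewrite Eshift.
  have e := Elin m (- (2 * alpha)) 0 (2 * alpha * f z + alpha ^+ 2 * G2) (dist z) f f z.
  rewrite mul0r add0r in e; rewrite -e.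
  apply: Emono => // u Su; rewrite mul0r add0r; exact: Konestep.
apply: le_trans (Emono j _ (fun z => Em m (dist z) z + (- (2 * alpha)) * Em m f z
      + (2 * alpha * f z + alpha ^+ 2 * G2)) theta1 inner hth1) _.
have e : Em j (fun z => Em m (dist z) z + (- (2 * alpha)) * Em m f z
      + (2 * alpha * f z + alpha ^+ 2 * G2)) theta1 =
   Em j (fun z => Em m (dist z) z) theta1 + (- (2 * alpha)) * Em j (fun z => Em m f z) theta1
   + (2 * alpha * Em j f theta1 + alpha ^+ 2 * G2)
  := Elin j (- (2 * alpha)) (2 * alpha) (alpha ^+ 2 * G2) (fun z => Em m (dist z) z)
          (fun z => Em m f z) f theta1.
by rewrite e Ecomp.
Qed.

Lemma C0 j : C j 0 = 0.
Proof.
rewrite /C -(Econst j 0 theta1); apply: Eext => u.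
by rewrite /Em E_0 /dist dotv_self_sub.
Qed.

Lemma C_ge0 j m : 0 <= C j m.
Proof.
rewrite /C -(Econst j 0 theta1); apply: Emono => // u Su.
rewrite -(Econst m 0 u); apply: Emono => // v _; exact: dist_ge0.
Qed.

Lemma last_sum j k : \sum_(m < k) (A (j + m)%N - A j) <= k%:R * (alpha * G2 / 2).
Proof.
suff : 2 * alpha * \sum_(m < k) (A (j + m)%N - A j) <= C j 0 - C j k + k%:R * (alpha ^+ 2 * G2).
  rewrite C0 => h; have := C_ge0 j k => h2.
  have h3 : 2 * alpha * \sum_(m < k) (A (j + m)%N - A j) <= 2 * alpha * (k%:R * (alpha * G2 / 2)).
    apply: (le_trans h); rewrite (_ : 2 * alpha * (k%:R * (alpha * G2 / 2)) = k%:R * (alpha ^+ 2 * G2)).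
      lra.
    by rewrite expr2; field.
  by rewrite ler_pM2l ?mulr_gt0 // in h3.
elim: k => [|k IH]; first by rewrite big_ord0 C0; lra.
rewrite big_ord_recr /= mulrDr -natr1 (mulrDl _ 1) mul1r.
have := last_step j k; lra.
Qed.

Lemma main_bound N :
  A N - fs <= dist theta_star theta1 / (2 * alpha * N.+1%:R)
              + alpha * G2 / 2 * (1 + \sum_(i < N) (i.+1%:R)^-1).
Proof.
have hyp : forall j k, (j + k <= N)%N ->
    \sum_(m < k.+1) ((A (j + m)%N - fs) - (A j - fs)) <= k.+1%:R * (alpha * G2 / 2).
  move=> j k _; rewrite (eq_bigr (fun m : 'I_k.+1 => A (j + m)%N - A j)); first exact: last_sum.
  by move=> m _; rewrite opprB addrA subrK.
have h := harmonic_last (fun t => A t - fs) (alpha * G2 / 2) N hyp.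
simpl in h.
have hs := std_bound N.+1.
set s := \sum_(t < N.+1) (A t - fs) in h hs.
set D := dist theta_star theta1 in hs *.
have n0 : 0 < N.+1%:R :> R by rewrite ltr0n.
have hsn : s / N.+1%:R <= D / (2 * alpha * N.+1%:R) + alpha * G2 / 2.
  rewrite ler_pdivrMr // mulrDl.
  rewrite (_ : D / (2 * alpha * N.+1%:R) * N.+1%:R = D / (2 * alpha)); last first.
    have n1 : 0 < 1 + N%:R :> R by rewrite addrC natr1 ltr0n.
    by field; rewrite !gt_eqF.
  have a2 : 0 < 2 * alpha by rewrite mulr_gt0.
  rewrite -(ler_pM2l a2) mulrDr (mulrC (2 * alpha) (D / _)) divfK ?gt_eqF //.
  rewrite (_ : 2 * alpha * (alpha * G2 / 2 * N.+1%:R) = N.+1%:R * (alpha ^+ 2 * G2)) //.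
  by rewrite expr2; field.
have := lerD hsn (lexx (alpha * G2 / 2 * \sum_(i < N) i.+1%:R^-1)).
move: h; rewrite mulrDr mulr1 addrA => h1 h2; exact: le_trans h1 h2.
Qed.

Lemma centered N :
  E phi theta_ref beta D1 D2 P alpha lambda N (fun th => f th - fs) theta1 = A N - fs.
Proof.
change (Em N (fun th => f th - fs) theta1 = A N - fs).
rewrite (Eext N (fun th => f th - fs) (fun u => f u + 0 * f u + (0 * f u + - fs))).
  by rewrite Elin !mul0r addr0 add0r.
by move=> u; rewrite !mul0r addr0 add0r.
Qed.

Lemma centered_ge0 N :
  0 <= E phi theta_ref beta D1 D2 P alpha lambda N (fun th => f th - fs) theta1.
Proof.
change (0 <= Em N (fun th => f th - fs) theta1).
rewrite -(Econst N 0 theta1); apply: Emono => // u Su.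
by rewrite subr_ge0; apply: hmin.
Qed.

End Main.
Section Numeric.
Context {R : realType}.

Lemma harm_step (n : nat) : (n.+2%:R : R)^-1 <= ln (n.+2%:R : R) - ln (n.+1%:R : R).
Proof.
have p2 : 0 < (n.+2%:R : R) by rewrite ltr0n.
have p1 : 0 < (n.+1%:R : R) by rewrite ltr0n.
have hx : -1 < - (n.+2%:R : R)^-1.
  rewrite ltrN2 invf_lt1 // ltr1n //.
have := le_ln1Dx hx.
have -> : 1 - (n.+2%:R : R)^-1 = n.+1%:R / n.+2%:R.
  rewrite -[n.+2%:R]natr1; field.
  have h : 0 <= n%:R :> R by rewrite ler0n.
  rewrite gt_eqF //; lra.
rewrite ln_div ?posrE // => h.
by rewrite -(opprB (ln (n.+1%:R : R))) lerNr.
Qed.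

Lemma harm_ln (n : nat) : \sum_(i < n.+1) (i.+1%:R : R)^-1 <= 1 + ln (n.+1%:R : R).
Proof.
elim: n => [|n IH]; first by rewrite big_ord1 ln1 invr1 addr0.
rewrite big_ord_recr /=; apply: le_trans (lerD IH (harm_step n)) _; lra.
Qed.

Lemma ln_ge1 (n : nat) : (4 <= n)%N -> 1 <= ln (n%:R : R).
Proof.
move=> hn.
have h1 : 1 / 2 <= expR (- (1 / 2)) :> R.
  by have := expR_ge1Dx (- (1 / 2) : R); lra.
have h2 : expR (1 / 2) <= 2 :> R.
  rewrite -(opprK (1 / 2)) expRN.
  rewrite -[X in _ <= X]invrK lef_pV2 ?posrE ?expR_gt0 ?invr_gt0 //.
  by apply: le_trans _ h1; rewrite div1r.
have h3 : expR 1 <= 4 :> R.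
  have e : expR 1 = expR (1 / 2) * expR (1 / 2) :> R by rewrite -expRD -splitr.
  rewrite e; apply: le_trans (ler_pM (expR_ge0 _) (expR_ge0 _) h2 h2) _.
  lra.
rewrite -{1}(expRK 1) ler_ln ?posrE ?expR_gt0 ?ltr0n //; last by lia.
apply: (le_trans h3); by rewrite ler_nat.
Qed.

End Numeric.
Theorem theorem4p1 (R : realType) (d : nat) (X : Type) (Y : finType)
  (phi : Y -> X -> 'rV[R]_d) (Phi : R) (hPhi : 0 < Phi)
  (hbound : forall (x : X) (y : Y), enorm (phi y x) <= Phi)
  (theta_ref : 'rV[R]_d) (beta : R) (hbeta : 0 < beta)
  (D1 : seq (X * Y * Y)) (D2 : seq (X * Y))
  (hD1 : (0 < size D1)%N) (hD2 : (0 < size D2)%N)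
  (Theta : set 'rV[R]_d) (hclosed : closed (Theta : set 'rV[R^o]_d)) (hconvex : convex_set Theta)
  (P : 'rV[R]_d -> 'rV[R]_d) (hP : is_euclid_proj Theta P)
  (theta1 : 'rV[R]_d) (htheta1 : Theta theta1)
  (lambda : R) (hlambda : 0 <= lambda <= 1)
  (theta_star : 'rV[R]_d) (hstar_in : Theta theta_star)
  (hstar_min : forall th, Theta th ->
     objective phi theta_ref beta D1 D2 lambda theta_star
     <= objective phi theta_ref beta D1 D2 lambda th)
  (alpha0 : R) (halpha0 : 0 < alpha0) :
  exists C : R, exists T0 : nat, forall T : nat, (T0 <= T)%N ->
    `| alright_expect phi theta_ref beta D1 D2 P
         (alpha0 / Num.sqrt T%:R) lambda
         (fun th => objective phi theta_ref beta D1 D2 lambda th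
                    - objective phi theta_ref beta D1 D2 lambda theta_star)
         T.-1 theta1 |
    <= C * (ln (T%:R : R) / Num.sqrt (T%:R : R)).
Proof.
move/andP: hlambda => [hl0 hl1].
have hphi : forall x y, dotv (phi y x) (phi y x) <= Phi ^+ 2.
  move=> x y; have h := hbound x y; rewrite dotv_enorm.
  have e0 : 0 <= enorm (phi y x) by rewrite /enorm sqrtr_ge0.
  rewrite !expr2; apply: ler_pM => //.
pose G2 := 4 * Phi ^+ 2 + 4 * beta ^+ 2 * Phi ^+ 2.
have P2 : 0 <= Phi ^+ 2 by rewrite sqr_ge0.
have B2 : 0 <= beta ^+ 2 * Phi ^+ 2 by rewrite mulr_ge0 ?sqr_ge0.
have hG1 : forall th s, dotv (g_DPO phi theta_ref beta th s) (g_DPO phi theta_ref beta th s) <= G2.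
  move=> th s; apply: le_trans (gdpo_bound phi theta_ref beta Phi hphi th s) _.
  rewrite /G2 -mulrA; lra.
have hG2 : forall th s, dotv (g_SFT phi th s) (g_SFT phi th s) <= G2.
  move=> th s; apply: le_trans (gsft_bound phi Phi hphi th s) _.
  rewrite /G2 -mulrA; lra.
have G20 : 0 <= G2 by rewrite /G2 -mulrA; lra.
pose D := dotv (theta1 - theta_star) (theta1 - theta_star).
have D0 : 0 <= D by apply: dotv_ge0.
exists (D / (2 * alpha0) + 3 / 2 * alpha0 * G2), 4%N => T hT.
case: T hT => [//|N] hT.
rewrite [N.+1.-1]/=.
have T0 : 0 < (N.+1%:R : R) by rewrite ltr0n; lia.
set sT := Num.sqrt (N.+1%:R : R).
have sT0 : 0 < sT by rewrite /sT sqrtr_gt0.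
have sTsT : sT * sT = N.+1%:R by rewrite -expr2 /sT sqr_sqrtr // ltW.
have ha : 0 < alpha0 / sT by rewrite divr_gt0.
have key := main_bound phi theta_ref beta D1 D2 P (alpha0 / sT) lambda Theta hP hconvex hl0 hl1 hD1 hD2
   ha G2 hG1 hG2 theta1 theta_star htheta1 hstar_in N.
have c := centered phi theta_ref beta D1 D2 P (alpha0 / sT) lambda Theta hP hl0 hl1 hD1 hD2 theta1 theta_star N.
have c0 := centered_ge0 phi theta_ref beta D1 D2 P (alpha0 / sT) lambda Theta hP hl0 hl1 hD1 hD2 theta1 theta_star htheta1 hstar_min N.
simpl in key, c.
rewrite /E in c c0.
rewrite ger0_norm // c.
apply: le_trans key _.
rewrite -/D.
have L1 : 1 <= ln (N.+1%:R : R) by apply: ln_ge1.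
have H1 : \sum_(i < N) (i.+1%:R : R)^-1 <= 1 + ln (N.+1%:R : R).
  case: (posnP N) => [N0|Npos].
    by move: L1; rewrite N0 big_ord0; lra.
  have := harm_ln (R:=R) (N.-1); rewrite prednK // => h; apply: (le_trans h).
  by rewrite lerD2l ler_ln ?posrE ?ltr0n // ler_nat.
set H := \sum_(i < N) _ in H1 *.
set L := ln _ in L1 H1 *.
have e1 : D / (2 * (alpha0 / sT) * N.+1%:R) = D / (2 * alpha0) * sT^-1.
  rewrite -sTsT; field; rewrite !gt_eqF //.
have e2 : alpha0 / sT * G2 / 2 * (1 + H) = alpha0 * G2 / 2 * sT^-1 * (1 + H).
  by field; rewrite gt_eqF.
rewrite e1 e2.
set u := sT^-1.
have u0 : 0 <= u by rewrite /u invr_ge0 ltW.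
set k1 := D / (2 * alpha0).
set k2 := alpha0 * G2 / 2.
have k10 : 0 <= k1 by rewrite /k1 divr_ge0 // mulr_ge0 // ltW.
have k20 : 0 <= k2 by rewrite /k2 divr_ge0 // mulr_ge0 // ltW.
have p1 : k1 * u * 1 <= k1 * u * L by apply: ler_wpM2l; [rewrite mulr_ge0 | ].
have p2 : k2 * u * (1 + H) <= k2 * u * (3 * L) by apply: ler_wpM2l; [rewrite mulr_ge0 | lra].
have -> : (k1 + 3 / 2 * alpha0 * G2) * (L / sT) = k1 * u * L + k2 * u * (3 * L).
  by rewrite /u /k2; field; rewrite gt_eqF.
rewrite mulr1 in p1; lra.
Qed.
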